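(* Let $f=f(x_1,\ldots,x_n)$ be a positive canalyzing Boolean function with $k\ge 0$ relevant variables. Then $f$ has at least $k+1$ extremal points, and it has exactly $k+1$ extremal points if and only if $f$ is linear read-once.
   Context: $B=\{0,1\}$; $\preceq$ is the coordinatewise order on $B^n$. $f$ is positive if $f(\mathbf{x})=1$ and $\mathbf{x}\preceq\mathbf{y}$ imply $f(\mathbf{y})=1$. Extremal points are the $\preceq$-maximal false points (maximal zeros) and $\preceq$-minimal true points (minimal ones). $f_{|x_i=\alpha}$ denotes the function of the remaining $n-1$ variables obtained by fixing $x_i=\alpha$. A variable $x_i$ is relevant if $f_{|x_i=0}\not\equiv f_{|x_i=1}$. $f$ is canalyzing if for some $i$, $f_{|x_i=0}$ or $f_{|x_i=1}$ is a constant function. A function is linear read-once (lro) if it is constant or can be represented by a nested formula: the literals $x,\overline{x}$ are nested formulas, and $x\vee t$, $x\wedge t$, $\overline{x}\vee t$, $\overline{x}\wedge t$ are nested formulas whenever $t$ is a nested formula containing neither $x$ nor $\overline{x}$. *)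

(* Defs.v *)
From mathcomp Require Import all_boot.
Set Implicit Arguments. Unset Strict Implicit. Unset Printing Implicit Defensive.

Definition pt (n : nat) := {ffun 'I_n -> bool}.

Definition bleq n (x y : pt n) : bool := [forall i, x i ==> y i].

Definition positive n (f : pt n -> bool) : Prop :=
  forall x y : pt n, f x -> bleq x y -> f y.

Definition max_zero n (f : pt n -> bool) (x : pt n) : bool :=
  ~~ f x && [forall y : pt n, (bleq x y && (y != x)) ==> f y].
Definition min_one n (f : pt n -> bool) (x : pt n) : bool :=
  f x && [forall y : pt n, (bleq y x && (y != x)) ==> ~~ f y].

Definition extremal_points n (f : pt n -> bool) : {set pt n} :=
  [set x | max_zero f x || min_one f x].

Definition upd n (x : pt n) (i : 'I_n) (a : bool) : pt n :=
  [ffun j => if j == i then a else x j].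

(* f_{|x_i = a}, represented as a function on B^n not depending on x_i *)
Definition restrict n (f : pt n -> bool) (i : 'I_n) (a : bool) : pt n -> bool :=
  fun x => f (upd x i a).

Definition const_fun n (g : pt n -> bool) : Prop :=
  exists c : bool, forall x, g x = c.

Definition relevant n (f : pt n -> bool) (i : 'I_n) : bool :=
  [exists x : pt n, restrict f i false x != restrict f i true x].

Definition relevant_vars n (f : pt n -> bool) : {set 'I_n} :=
  [set i | relevant f i].

Definition canalyzing n (f : pt n -> bool) : Prop :=
  exists (i : 'I_n) (a : bool), const_fun (restrict f i a).

(* Nested formulas. A literal (i, b) is x_i if b = true and its negation if b = false. *)
Inductive nested (n : nat) : Type :=
  | NLit of 'I_n & bool
  | NOr  of 'I_n & bool & nested n
  | NAnd of 'I_n & bool & nested n.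

Definition lit n (i : 'I_n) (b : bool) (x : pt n) : bool :=
  if b then x i else ~~ x i.

Fixpoint nvars n (t : nested n) : seq 'I_n :=
  match t with
  | NLit i _ => [:: i]
  | NOr i _ t' => i :: nvars t'
  | NAnd i _ t' => i :: nvars t'
  end.

Fixpoint nwf n (t : nested n) : bool :=
  match t with
  | NLit _ _ => true
  | NOr i _ t' => (i \notin nvars t') && nwf t'
  | NAnd i _ t' => (i \notin nvars t') && nwf t'
  end.

Fixpoint neval n (t : nested n) (x : pt n) : bool :=
  match t with
  | NLit i b => lit i b x
  | NOr i b t' => lit i b x || neval t' x
  | NAnd i b t' => lit i b x && neval t' x
  end.

Definition lro n (f : pt n -> bool) : Prop :=
  const_fun f \/ exists t : nested n, nwf t /\ forall x, f x = neval t x.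

(* Main.v *)
Require Import Defs.
From mathcomp Require Import all_boot.
Set Implicit Arguments. Unset Strict Implicit. Unset Printing Implicit Defensive.

Section Basics.
Variable n : nat.
Implicit Types (x y z : pt n) (f g h : pt n -> bool) (i j : 'I_n).

Lemma upd_eq x i a : upd x i a i = a.
Proof. by rewrite /upd ffunE eqxx. Qed.

Lemma upd_neq x i j a : j != i -> upd x i a j = x j.
Proof. by rewrite /upd ffunE => /negbTE ->. Qed.

Lemma updE x i a j : upd x i a j = if j == i then a else x j.
Proof. by rewrite /upd ffunE. Qed.

Lemma upd_upd x i a b : upd (upd x i a) i b = upd x i b.
Proof. by apply/ffunP => j; rewrite !updE; case: eqP. Qed.

Lemma upd_comm x i j a b : i != j -> upd (upd x i a) j b = upd (upd x j b) i a.
Proof.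
move=> ij; apply/ffunP => k; rewrite !updE.
case: (eqVneq k j) => [kj|]; case: (eqVneq k i) => [ki|] //.
by move: ij; rewrite -ki kj eqxx.
Qed.

Lemma upd_id x i : upd x i (x i) = x.
Proof. by apply/ffunP => j; rewrite updE; case: eqP => // ->. Qed.

Lemma upd_idb x i a : x i = a -> upd x i a = x.
Proof. by move=> <-; apply: upd_id. Qed.

Lemma bleqP x y : reflect (forall i, x i -> y i) (bleq x y).
Proof.
apply: (iffP forallP) => H i; first by move=> xi; move: (H i); rewrite xi.
by apply/implyP; apply: H.
Qed.

Lemma bleq_refl x : bleq x x.
Proof. by apply/bleqP. Qed.

Lemma bleq_trans x y z : bleq x y -> bleq y z -> bleq x z.
Proof. by move=> /bleqP H1 /bleqP H2; apply/bleqP => i /H1 /H2. Qed.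

Lemma bleq_anti x y : bleq x y -> bleq y x -> x = y.
Proof.
move=> /bleqP H1 /bleqP H2; apply/ffunP => i.
by case E: (x i); [rewrite (H1 _ E)| case E': (y i) => //; rewrite (H2 _ E') in E].
Qed.

Lemma bleq_updl x i : bleq (upd x i false) x.
Proof. by apply/bleqP => j; rewrite updE; case: eqP. Qed.

Lemma bleq_updr x i : bleq x (upd x i true).
Proof. by apply/bleqP => j; rewrite updE; case: eqP. Qed.

Lemma bleq_upd x y i a : bleq x y -> bleq (upd x i a) (upd y i a).
Proof. by move=> /bleqP H; apply/bleqP => j; rewrite !updE; case: eqP => // _ /H. Qed.

Lemma bleq_upd01 x i : bleq (upd x i false) (upd x i true).
Proof. by apply/bleqP => j; rewrite !updE; case: eqP. Qed.

Lemma bleq_updP x y i : bleq x y -> bleq (upd x i false) y.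
Proof. by move=> H; apply: bleq_trans (bleq_updl _ _) H. Qed.

Lemma bleq_updQ x y i : bleq x y -> bleq x (upd y i true).
Proof. by move=> H; apply: bleq_trans H (bleq_updr _ _). Qed.

Lemma bleq_updT x y i : bleq x y -> y i -> bleq (upd x i true) y.
Proof. by move=> /bleqP H yi; apply/bleqP => j; rewrite updE; case: eqP => [->|_ /H]. Qed.

Lemma bleq_updF x y i : bleq x y -> ~~ x i -> bleq x (upd y i false).
Proof.
move=> /bleqP H xi; apply/bleqP => j; rewrite updE; case: eqP => [->|_ /H] //.
by rewrite (negbTE xi).
Qed.

Lemma pos_le f x y : positive f -> bleq x y -> f x -> f y.
Proof. by move=> P H fx; apply: P fx H. Qed.

Lemma pos_upd f x i : positive f -> f (upd x i false) -> f (upd x i true).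
Proof. by move=> P H; apply: P H (bleq_upd01 _ _). Qed.

Definition wt x := #|[set i | x i]|.

Lemma wt_lt x y : bleq x y -> y != x -> wt x < wt y.
Proof.
move=> /bleqP H ne; apply: proper_card; rewrite properEneq; apply/andP; split.
  apply/negP => /eqP E; apply: (negP ne); apply/eqP/ffunP => i.
  by move/setP: E => /(_ i); rewrite !inE.
by apply/subsetP => i; rewrite !inE; apply: H.
Qed.

Lemma max_zeroP f x :
  reflect (~~ f x /\ forall y, bleq x y -> y != x -> f y) (max_zero f x).
Proof.
apply: (iffP andP) => -[H1 H2]; split => //.
  by move=> y xy ne; move/forallP: H2 => /(_ y); rewrite xy ne.
by apply/forallP => y; apply/implyP => /andP[]; apply: H2.
Qed.

Lemma min_oneP f x :
  reflect (f x /\ forall y, bleq y x -> y != x -> ~~ f y) (min_one f x).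
Proof.
apply: (iffP andP) => -[H1 H2]; split => //.
  by move=> y xy ne; move/forallP: H2 => /(_ y); rewrite xy ne.
by apply/forallP => y; apply/implyP => /andP[]; apply: H2.
Qed.

Lemma climb_up f x : ~~ f x -> exists m, bleq x m /\ max_zero f m.
Proof.
move=> fx.
have Px : [pred y | bleq x y && ~~ f y] x by rewrite /= bleq_refl.
case: (@arg_maxnP _ _ _ wt Px) => m /andP[xm fm] Hmax.
exists m; split => //; apply/max_zeroP; split => // y my ne.
apply/negPn/negP => fy.
have := Hmax y; rewrite /= (bleq_trans xm my) fy => /(_ isT).
by rewrite leqNgt (wt_lt my ne).
Qed.

Lemma climb_down f x : f x -> exists a, bleq a x /\ min_one f a.
Proof.
move=> fx.
have Px : [pred y | bleq y x && f y] x by rewrite /= bleq_refl.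
case: (@arg_minnP _ _ _ wt Px) => m /andP[xm fm] Hmin.
exists m; split => //; apply/min_oneP; split => // y my ne.
apply/negP => fy.
have := Hmin y; rewrite /= (bleq_trans my xm) fy => /(_ isT).
by rewrite leqNgt (wt_lt my) // eq_sym.
Qed.

Lemma relP f i :
  reflect (exists x, f (upd x i false) != f (upd x i true)) (relevant f i).
Proof. by apply: (iffP existsP) => -[x H]; exists x. Qed.

Lemma relposP f i : positive f ->
  reflect (exists x, ~~ f (upd x i false) && f (upd x i true)) (relevant f i).
Proof.
move=> P; apply: (iffP (relP f i)) => -[x H]; exists x.
  move: H (@pos_upd f x i P); case: (f (upd x i false)) => //=.
    by move=> /negP H /(_ isT) E; rewrite E in H.
  by case: (f _).
by move: H; case: (f _); case: (f _).
Qed.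

Lemma in_rel f i : (i \in relevant_vars f) = relevant f i.
Proof. by rewrite inE. Qed.

End Basics.
Section More.
Variable n : nat.
Implicit Types (x y z : pt n) (f g h : pt n -> bool) (i j v : 'I_n).

Definition indep h v := forall x a, h (upd x v a) = h x.

Lemma restrict_indep g v a : indep (restrict g v a) v.
Proof. by move=> x b; rewrite /restrict upd_upd. Qed.

Lemma indep_mz h v x : indep h v -> max_zero h x -> x v.
Proof.
move=> I /max_zeroP[hx H]; apply/negPn/negP => xv.
have ne : upd x v true != x by apply/negP => /eqP E; move: xv; rewrite -E upd_eq.
by move: (H _ (bleq_updr x v) ne); rewrite I (negbTE hx).
Qed.

Lemma indep_mo h v x : indep h v -> min_one h x -> ~~ x v.
Proof.
move=> I /min_oneP[hx H]; apply/negP => xv.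
have ne : upd x v false != x by apply/negP => /eqP E; move: xv; rewrite -E upd_eq.
by move: (H _ (bleq_updl x v) ne); rewrite I hx.
Qed.

Lemma indep_nrel h v : indep h v -> ~~ relevant h v.
Proof. by move=> I; apply/relP => -[x]; rewrite !I eqxx. Qed.

Lemma rel_restrict g v a i : relevant (restrict g v a) i -> relevant g i.
Proof.
case: (eqVneq i v) => [iv|iv].
  by rewrite iv => H; move: (indep_nrel (restrict_indep g v a)); rewrite H.
move=> /relP[x]; rewrite /restrict => H; apply/relP; exists (upd x v a).
by rewrite !(@upd_comm _ x i v) in H.
Qed.

Lemma rel_split g v i : relevant g i -> i != v ->
  relevant (restrict g v false) i || relevant (restrict g v true) i.
Proof.
move=> /relP[x H] iv; apply/orP.
have E : forall a, upd (upd x i a) v (x v) = upd x i a.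
  by move=> a; rewrite upd_comm // upd_id.
by case Ev: (x v); [right|left]; apply/relP; exists x; rewrite /restrict;
  move: (E false) (E true); rewrite Ev => -> ->.
Qed.

Lemma max_zero_eq f f' x : f =1 f' -> max_zero f x = max_zero f' x.
Proof.
move=> E; rewrite /max_zero E; congr (_ && _); apply: eq_forallb => y.
by rewrite E.
Qed.

Lemma min_one_eq f f' x : f =1 f' -> min_one f x = min_one f' x.
Proof.
move=> E; rewrite /min_one E; congr (_ && _); apply: eq_forallb => y.
by rewrite E.
Qed.

Lemma ext_eq f f' : f =1 f' -> extremal_points f = extremal_points f'.
Proof. by move=> E; apply/setP => x; rewrite !inE (max_zero_eq _ E) (min_one_eq _ E). Qed.

Lemma rel_eq f f' : f =1 f' -> relevant_vars f = relevant_vars f'.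
Proof.
move=> E; apply/setP => i; rewrite !inE /relevant /restrict.
by apply: eq_existsb => x; rewrite !E.
Qed.

Lemma pos_eq f f' : f =1 f' -> positive f -> positive f'.
Proof. by move=> E P x y; rewrite -!E; apply: P. Qed.

Definition one : pt n := [ffun => true].
Definition zero : pt n := [ffun => false].

Lemma bleq_one x : bleq x one.
Proof. by apply/bleqP => i; rewrite ffunE. Qed.
Lemma bleq_zero x : bleq zero x.
Proof. by apply/bleqP => i; rewrite ffunE. Qed.

Lemma const_ext f c : (forall x, f x = c) -> #|extremal_points f| = 1.
Proof.
move=> C.
suff -> : extremal_points f = [set (if c then zero else one)] by rewrite cards1.
apply/setP => x; rewrite !inE.
case: c C => C.
- have -> : max_zero f x = false by rewrite /max_zero C.
  rewrite /=; apply/min_oneP/eqP => [[_ H]|->].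
    case: (eqVneq x zero) => // ne.
    by move: (H zero (bleq_zero x)); rewrite C eq_sym ne => /(_ isT).
  by split; [rewrite C|move=> y /bleqP yz ne; case/negP: ne; apply/eqP/ffunP => i;
     move: (yz i); rewrite !ffunE; case: (y i) => // ->].
- have -> : min_one f x = false by rewrite /min_one C.
  rewrite orbF; apply/max_zeroP/eqP => [[_ H]|->].
    case: (eqVneq x one) => // ne.
    by move: (H one (bleq_one x)); rewrite C eq_sym ne => /(_ isT).
  by split; [rewrite C|move=> y /bleqP yz ne; case/negP: ne; apply/eqP/ffunP => i;
     move: (yz i); rewrite !ffunE; case: (y i) => //; move=> H; rewrite H].
Qed.

Lemma const_rel f c : (forall x, f x = c) -> #|relevant_vars f| = 0.
Proof.
move=> C; apply/eqP; rewrite cards_eq0; apply/eqP/setP => i; rewrite !inE.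
by apply/relP => -[x]; rewrite !C eqxx.
Qed.

Lemma norel_const f : positive f -> #|relevant_vars f| = 0 -> forall x, f x = f zero.
Proof.
move=> P /eqP; rewrite cards_eq0 => /eqP R0 x.
case Ez: (f zero); first by apply: P Ez (bleq_zero _).
apply/negbTE/negP => fx.
case: (climb_down fx) => a [_ /min_oneP[fa Ha]].
have [i ai] : exists i, a i.
  case: (pickP (fun i => a i)) => [i ai|H]; first by exists i.
  have az : a = zero by apply/ffunP => i; rewrite ffunE H.
  by rewrite az Ez in fa.
have : i \in relevant_vars f.
  have ne : upd a i false != a by apply/negP => /eqP E; move: ai; rewrite -E upd_eq.
  rewrite inE; apply/relP; exists a.
  by rewrite (upd_idb ai) fa (negbTE (Ha _ (bleq_updl a i) ne)).
by rewrite R0 inE.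
Qed.

Definition compl x : pt n := [ffun i => ~~ x i].
Definition dual f : pt n -> bool := fun x => ~~ f (compl x).

Lemma complK : involutive compl.
Proof. by move=> x; apply/ffunP => i; rewrite !ffunE negbK. Qed.

Lemma bleq_compl x y : bleq (compl x) (compl y) = bleq y x.
Proof.
apply/bleqP/bleqP => H i.
  by move=> yi; move: (H i); rewrite !ffunE yi; case: (x i) => // /(_ isT).
by rewrite !ffunE; apply: contra; apply: H.
Qed.

Lemma upd_compl x i a : compl (upd x i a) = upd (compl x) i (~~ a).
Proof. by apply/ffunP => j; rewrite ffunE !updE ffunE; case: eqP. Qed.

Lemma dual_pos f : positive f -> positive (dual f).
Proof.
move=> P x y; rewrite /dual => fx xy; move: fx; apply: contra => fy.
by apply: (P _ _ fy); rewrite bleq_compl.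
Qed.

Lemma dualK f x : dual (dual f) x = f x.
Proof. by rewrite /dual complK negbK. Qed.

Lemma mz_dual f x : max_zero (dual f) x = min_one f (compl x).
Proof.
apply/max_zeroP/min_oneP => -[H1 H2]; split.
- by move: H1; rewrite /dual negbK.
- move=> y yx ne; have := H2 (compl y); rewrite /dual complK => K; apply: K.
    by rewrite -[x]complK bleq_compl.
  by move: ne; apply: contra => /eqP E; rewrite -E complK.
- by rewrite /dual negbK.
- move=> y xy ne; rewrite /dual; apply: H2.
    by rewrite bleq_compl.
  by move: ne; apply: contra => /eqP E; rewrite -[y]complK E complK.
Qed.

Lemma mo_dual f x : min_one (dual f) x = max_zero f (compl x).
Proof.
rewrite -[in RHS](max_zero_eq _ (dualK f)) mz_dual complK.
by apply: min_one_eq.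
Qed.

Lemma ext_dual f : #|extremal_points (dual f)| = #|extremal_points f|.
Proof.
have -> : extremal_points (dual f) = [set compl x | x in extremal_points f].
  apply/setP => x; apply/idP/imsetP.
    by rewrite inE => H; exists (compl x); rewrite ?complK // inE orbC -mz_dual -mo_dual.
  by move=> [y]; rewrite !inE => H ->; rewrite mz_dual mo_dual complK orbC.
by rewrite card_imset //; apply: can_inj complK.
Qed.

Lemma restrict_dual f v a x : restrict (dual f) v a x = dual (restrict f v (~~ a)) x.
Proof. by rewrite /restrict /dual upd_compl. Qed.

Lemma rel_dual f i : relevant (dual f) i = relevant f i.
Proof.
apply/relP/relP => -[x H].
  exists (compl x); move: H; rewrite /dual !upd_compl /=.
  by case: (f _); case: (f _).
exists (compl x); rewrite /dual !upd_compl complK /=.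
by move: H; case: (f _); case: (f _).
Qed.

Lemma relv_dual f : relevant_vars (dual f) = relevant_vars f.
Proof. by apply/setP => i; rewrite !inE rel_dual. Qed.

Lemma canal_dual f : canalyzing (dual f) -> canalyzing f.
Proof.
move=> [i [a [c C]]]; exists i, (~~ a), (~~ c) => x.
move: (C (compl x)); rewrite restrict_dual /dual /restrict complK => <-.
by rewrite negbK.
Qed.

Lemma const_dual f : const_fun (dual f) -> const_fun f.
Proof.
move=> [c C]; exists (~~ c) => x.
by move: (C (compl x)); rewrite /dual complK => <-; rewrite negbK.
Qed.

End More.
Section Core.
Variable n : nat.
Implicit Types (x y z : pt n) (f h : pt n -> bool) (i j : 'I_n).
Variables (g : pt n -> bool) (v : 'I_n).
Hypothesis Pg : positive g.

Local Notation g0 := (restrict g v false).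
Local Notation g1 := (restrict g v true).

Lemma pos_restrict a : positive (restrict g v a).
Proof. by move=> x y gx xy; apply: Pg gx (bleq_upd _ _ xy). Qed.

Lemma g_g1 x : g x -> g1 x.
Proof. by move=> gx; apply: Pg gx (bleq_updr _ _). Qed.

Lemma g0_g x : g0 x -> g x.
Proof. by move=> gx; apply: Pg gx (bleq_updl _ _). Qed.

Lemma g_v x a : x v = a -> g x = restrict g v a x.
Proof. by move=> E; rewrite /restrict upd_idb. Qed.

Definition phi p := if min_one g1 p then (if g p then p else upd p v true) else p.

Lemma phi_in p : p \in extremal_points g1 -> phi p \in extremal_points g.
Proof.
rewrite !inE /phi; case Hmo: (min_one g1 p).
  have pv := indep_mo (restrict_indep g v true) Hmo.
  move/min_oneP: Hmo => [g1p Hp] _.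
  case gp: (g p).
    apply/orP; right; apply/min_oneP; split => // y yp ne.
    by apply: contra (Hp _ yp ne); apply: g_g1.
  apply/orP; right; apply/min_oneP; split; first by [].
  move=> y yq ne; case yv: (y v).
  - rewrite (g_v yv) -(restrict_indep g v true y false); apply: Hp.
      apply/bleqP => j; rewrite updE; case: eqP => // /eqP jv yj.
      by move/bleqP: yq => /(_ j yj); rewrite upd_neq.
    apply: contra ne => /eqP E; apply/eqP.
    by rewrite -E upd_upd upd_idb.
  - apply/negP => gy; move/negP: gp; apply; apply: Pg gy _.
    apply/bleqP => j yj; move/bleqP: yq => /(_ j yj).
    rewrite updE; case: eqP => // jv; by rewrite jv yv in yj.
rewrite orbF => Hmz; have pv := indep_mz (restrict_indep g v true) Hmz.
apply/orP; left; move/max_zeroP: Hmz => [g1p Hp]; apply/max_zeroP; split.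
  by rewrite (g_v pv).
move=> y py ne; have yv : y v by move/bleqP: py; apply.
by rewrite (g_v yv); apply: Hp.
Qed.

Lemma phi_inj : {in extremal_points g1 &, injective phi}.
Proof.
have mzv p : p \in extremal_points g1 -> ~~ min_one g1 p -> p v /\ ~~ g1 p.
  rewrite inE => /orP[H _|->//]; split; first exact: indep_mz (restrict_indep g v true) H.
  by case/andP: H.
move=> p q Hp Hq; rewrite /phi.
case Mp: (min_one g1 p); case Mq: (min_one g1 q).
- have pv := indep_mo (restrict_indep g v true) Mp.
  have qv := indep_mo (restrict_indep g v true) Mq.
  case: (g p); case: (g q) => // E.
  + by move: pv; rewrite E upd_eq.
  + by move: qv; rewrite -E upd_eq.
  + by rewrite -(upd_idb (negbTE pv)) -(upd_idb (negbTE qv)) -(upd_upd p v true)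
       -(upd_upd q v true) E.
- have [qv g1q] := mzv q Hq (negbT Mq).
  have pv := indep_mo (restrict_indep g v true) Mp.
  case: (g p) => E; first by move: pv; rewrite E qv.
  by move: g1q; rewrite -(g_v qv) -E -/(restrict g v true p); case/andP: Mp => ->.
- have [pv g1p] := mzv p Hp (negbT Mp).
  have qv := indep_mo (restrict_indep g v true) Mq.
  case: (g q) => E; first by move: qv; rewrite -E pv.
  by move: g1p; rewrite -(g_v pv) E -/(restrict g v true q); case/andP: Mq => ->.
- by [].
Qed.

Lemma phi_v p : p \in extremal_points g1 -> ~~ phi p v ->
  [/\ min_one g1 p, g p & phi p = p].
Proof.
rewrite /phi; case Mp: (min_one g1 p).
  by case gp: (g p) => // _; rewrite upd_eq.
rewrite inE Mp orbF => H; by rewrite (indep_mz (restrict_indep g v true) H).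
Qed.

Definition Iset := [set phi p | p in extremal_points g1].

Lemma Iset_sub : Iset \subset extremal_points g.
Proof. by apply/subsetP => x /imsetP[p Hp ->]; apply: phi_in. Qed.

Lemma card_Iset : #|Iset| = #|extremal_points g1|.
Proof. by rewrite card_in_imset //; apply: phi_inj. Qed.

Lemma zero_notin b : ~~ g b -> ~~ b v -> b \notin Iset.
Proof.
move=> gb bv; apply/imsetP => -[p Hp E].
have pvE : ~~ phi p v by rewrite -E.
by have [_ gp E'] := phi_v Hp pvE; move: gb; rewrite E E' gp.
Qed.

Lemma exists_b : relevant g v -> exists b, max_zero g b && ~~ b v.
Proof.
move=> /(relposP _ Pg) [x /andP[g0x g1x]].
case: (climb_up g0x) => m [xm Hm]; exists m; rewrite Hm /=.
apply/negP => mv; move/max_zeroP: Hm => [gm _]; move/negP: gm; apply.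
by apply: Pg g1x _; rewrite -[upd x v true](upd_upd x v false); apply: bleq_updT.
Qed.

Lemma count1 : relevant g v -> #|extremal_points g1|.+1 <= #|extremal_points g|.
Proof.
move=> Rv; case: (exists_b Rv) => b /andP[Hb bv].
have gb : ~~ g b by case/andP: Hb.
have E : #|b |: Iset| = #|Iset|.+1 by rewrite cardsU1 (zero_notin gb bv).
rewrite -card_Iset -E; apply: subset_leq_card.
by rewrite subUset sub1set inE Hb Iset_sub.
Qed.

Lemma count_E1 b1 b2 : max_zero g b1 -> ~~ b1 v -> max_zero g b2 -> ~~ b2 v -> b1 != b2 ->
  #|extremal_points g1|.+2 <= #|extremal_points g|.
Proof.
move=> H1 v1 H2 v2 ne.
have g1b : ~~ g b1 by case/andP: H1.
have g2b : ~~ g b2 by case/andP: H2.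
have -> : #|extremal_points g1|.+2 = #|b1 |: (b2 |: Iset)|.
  rewrite !cardsU1 !inE negb_or ne (zero_notin g1b v1) (zero_notin g2b v2) card_Iset.
  by rewrite add1n.
by apply: subset_leq_card; rewrite !subUset !sub1set !inE H1 H2 Iset_sub.
Qed.

Lemma count_E2 w : relevant g v -> min_one g0 w -> ~~ min_one g1 w ->
  #|extremal_points g1|.+2 <= #|extremal_points g|.
Proof.
move=> Rv Hw Nw; case: (exists_b Rv) => b /andP[Hb bv].
have gb : ~~ g b by case/andP: Hb.
have wv := indep_mo (restrict_indep g v false) Hw.
have Mw : min_one g w.
  move/min_oneP: Hw => [g0w Hw']; apply/min_oneP; split; first by rewrite (g_v (negbTE wv)).
  move=> y yw ne; have yv : y v = false.
    by apply/negP => yv; move/bleqP: yw => /(_ v yv); rewrite (negbTE wv).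
  by rewrite (g_v yv); apply: Hw'.
have wI : w \notin Iset.
  apply/imsetP => -[p Hp E]; have pvE : ~~ phi p v by rewrite -E.
  have [M _ E'] := phi_v Hp pvE.
  by move: Nw; rewrite E E' M.
have wb : w != b by apply: contraNneq gb => <-; case/andP: Mw.
have -> : #|extremal_points g1|.+2 = #|w |: (b |: Iset)|.
  rewrite !cardsU1 !inE negb_or wb wI (zero_notin gb bv) card_Iset.
  by rewrite add1n.
by apply: subset_leq_card; rewrite !subUset !sub1set !inE Hb Mw orbT Iset_sub.
Qed.

End Core.
Definition Pext n (g : pt n -> bool) :=
  #|relevant_vars g|.+1 <= #|extremal_points g| /\
  (#|extremal_points g| = #|relevant_vars g|.+1 -> const_fun g \/ canalyzing g).

Section CoreLemma.
Variable n : nat.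
Implicit Types (x y z : pt n) (f h : pt n -> bool) (i j : 'I_n).

Lemma rel_bound (g : pt n -> bool) v :
  relevant_vars (restrict g v false) \subset relevant_vars (restrict g v true) ->
  #|relevant_vars g| <= #|relevant_vars (restrict g v true)|.+1.
Proof.
move=> S; apply: leq_trans (_ : #|v |: relevant_vars (restrict g v true)| <= _).
  apply: subset_leq_card; apply/subsetP => i; rewrite !inE => Ri.
  case: (eqVneq i v) => //= iv.
  case/orP: (rel_split Ri iv) => // R0.
  by move/subsetP: S => /(_ i); rewrite !inE; apply.
by rewrite cardsU1; case: (_ \notin _).
Qed.

Lemma core (g : pt n -> bool) v : positive g -> relevant g v ->
  relevant_vars (restrict g v false) \subset relevant_vars (restrict g v true) ->
  Pext (restrict g v true) -> Pext g.
Proof.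
move=> Pg Rv S [IH1 IH2].
have RB := rel_bound S.
have C1 := count1 Pg Rv.
split; first by apply: (leq_trans _ C1); rewrite ltnS; exact: leq_trans RB IH1.
move=> Eq.
have Eg1 : #|extremal_points (restrict g v true)| = #|relevant_vars (restrict g v true)|.+1.
  apply/eqP; rewrite eqn_leq IH1 andbT -ltnS; apply: (leq_trans C1).
  by rewrite Eq ltnS.
have Eg : #|extremal_points g| = #|extremal_points (restrict g v true)|.+1.
  by apply/eqP; rewrite eqn_leq C1 andbT Eq Eg1 !ltnS.
have E1 : forall b1 b2, max_zero g b1 -> ~~ b1 v -> max_zero g b2 -> ~~ b2 v -> b1 = b2.
  move=> b1 b2 H1 v1 H2 v2; apply/eqP/negPn/negP => ne.
  by have := count_E1 Pg H1 v1 H2 v2 ne; rewrite Eg ltnn.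
have E2 : forall w, min_one (restrict g v false) w -> min_one (restrict g v true) w.
  move=> w Hw; apply/negPn/negP => Nw.
  by have := count_E2 Pg Rv Hw Nw; rewrite Eg ltnn.
right.
have canv : const_fun (restrict g v true) -> canalyzing g.
  by move=> Cc; exists v, true.
case: (IH2 Eg1) => [Cc|[y [a [c C]]]]; first exact: canv.
rewrite /restrict in C.
case: (eqVneq y v) => [yv|yv].
  apply: canv; exists c => x; rewrite -(C x) yv.
  by rewrite -/(restrict g v true (upd x v a)) restrict_indep.
have P1 : positive (restrict g v true) by apply: pos_restrict.
have P0 : positive (restrict g v false) by apply: pos_restrict.
case: a C => C; last first.
  case: c C => C.
    apply: canv; exists true => x; apply: P1 (C x) _; exact: bleq_updl.
  exists y, false, false => x; rewrite /restrict; apply/negP => gx.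
  by move: (Pg _ _ gx (bleq_updr _ v)); rewrite C.
case: c C => C; last first.
  apply: canv; exists false => x; apply/negP => gx.
  by move: (P1 _ _ gx (bleq_updr x y)); rewrite /restrict C.
set e := upd (zero n) y true.
case g0e: (g (upd e v false)).
  exists y, true, true => x; rewrite /restrict; apply: Pg g0e _.
  by apply: bleq_updP; apply: bleq_upd; apply: bleq_zero.
have Ind : forall x, g (upd x v false) -> g (upd (upd x y false) v false).
  move=> x g0x; case: (@climb_down _ (restrict g v false) x g0x) => w [wx Mw].
  have wy : w y = false.
    apply/negP => wy; have M1 := E2 _ Mw.
    case/min_oneP: M1 => _ H.
    have ew : bleq e w by apply: bleq_updT => //; apply: bleq_zero.
    case: (eqVneq e w) => [ew'|ne].
      by case/min_oneP: Mw => g0w _; move: g0w; rewrite /restrict -ew' g0e.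
    by move: (H e ew ne); rewrite /restrict C.
  case/min_oneP: Mw => g0w _; apply: (P0 _ _ g0w).
  by apply: bleq_updF => //; rewrite wy.
case: (pickP (fun x => g (upd x v false))) => [x0 g0x0|N0]; last first.
  by exists v, false, false => x; rewrite /restrict N0.
case: (exists_b Pg Rv) => b /andP[Mb bv].
have gb : ~~ g b by case/andP: Mb.
case: (pickP (fun j => (j != v) && ~~ b j)) => [j /andP[jv bj]|Nj]; last first.
  move/negP: gb; case; apply: Pg g0x0 _; apply/bleqP => j.
  rewrite updE; case: eqP => // /eqP jv _.
  by move: (Nj j); rewrite jv /=; move/negbFE.
exists j, true, true => x; rewrite /restrict; apply/negPn/negP => gx.
set X := upd x j true in gx.
set x' := upd (upd X v false) y true.
have gx' : ~~ g x'.
  have -> : x' = upd (upd X y true) v false by rewrite /x' upd_comm // eq_sym.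
  apply/negP => H.
  move: (Ind _ H); rewrite upd_upd => H'.
  have : g (upd X v false).
    apply: Pg H' _; apply: bleq_upd; exact: bleq_updl.
  by move=> H0; move: (Pg _ _ H0 (bleq_updl _ v)); rewrite (negbTE gx).
case: (climb_up gx') => m [xm Mm].
have mv : ~~ m v.
  apply/negP => mv; case/max_zeroP: Mm => gm _; move/negP: gm; apply.
  apply: Pg (_ : g (upd x' v true)) _; last by apply: bleq_updT.
  have x'y : x' y by rewrite /x' upd_eq.
  by rewrite -(upd_idb x'y) C.
have mb := E1 _ _ Mm mv Mb bv.
move/negP: bj; apply; rewrite -mb; move/bleqP: xm; apply.
rewrite /x' updE; case: eqP => // _.
by rewrite upd_neq // /X upd_eq.
Qed.

End CoreLemma.
Section Select.
Variable n : nat.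
Implicit Types (x y z : pt n) (f h : pt n -> bool) (i j : 'I_n).

Definition freq (g : pt n -> bool) i := #|[set a | min_one g a && a i]|.

Lemma select (g : pt n -> bool) : positive g -> 0 < #|relevant_vars g| ->
  exists v, relevant g v /\
   (relevant_vars (restrict g v false) \subset relevant_vars (restrict g v true) \/
    relevant_vars (restrict g v true) \subset relevant_vars (restrict g v false)).
Proof.
move=> Pg /card_gt0P[i0 Hi0].
case: (@arg_minnP _ i0 (fun i => i \in relevant_vars g) (freq g) Hi0) => v Hv Hmin.
exists v; rewrite -in_rel; split => //.
case S: (relevant_vars (restrict g v false) \subset relevant_vars (restrict g v true)); [by left|right].
case/subsetPn: (negbT S) => u; rewrite !inE => Ru0 Nu1.
apply/subsetP => w; rewrite !inE => Rw1; apply: contraT => Nw0.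
have P0 : positive (restrict g v false) by apply: pos_restrict.
have wv : w != v.
  apply/eqP => E; move: Rw1; rewrite E; apply/negP; apply: indep_nrel; apply: restrict_indep.
have uv : u != v.
  apply/eqP => E; move: Ru0; rewrite E; apply/negP; apply: indep_nrel; apply: restrict_indep.
have uw : u != w by apply/eqP => E; move: Ru0; rewrite E (negbTE Nw0).
have Cl1 : forall a, min_one g a -> a w -> a v.
  move=> a Ma aw; apply/negPn/negP => av; move/negP: Nw0; apply.
  apply/relP; exists a; rewrite /restrict (upd_idb aw) (upd_idb (negbTE av)).
  have -> : upd (upd a w false) v false = upd a w false.
    by apply: upd_idb; rewrite upd_neq ?(negbTE av) // eq_sym.
  case/min_oneP: Ma => -> H; rewrite (negbTE (H _ (bleq_updl a w) _)) //.
  by apply/negP => /eqP E; move: aw; rewrite -E upd_eq.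
have Rw : relevant g w by apply: rel_restrict Rw1.
have Fe : [set a | min_one g a && a w] = [set a | min_one g a && a v].
  apply/eqP; rewrite eqEcard; apply/andP; split.
    by apply/subsetP => a; rewrite !inE => /andP[Ma aw]; rewrite Ma (Cl1 _ Ma aw).
  by move: (Hmin w); rewrite inE => /(_ Rw).
have Cl1' : forall a, min_one g a -> a v -> a w.
  move=> a Ma av; have : a \in [set a | min_one g a && a v] by rewrite inE Ma av.
  by rewrite -Fe inE => /andP[].
have Cl2 : forall z, max_zero g z -> z v -> z u.
  move=> z Mz zv; apply/negPn/negP => zu; move/negP: Nu1; apply.
  apply/relP; exists z; rewrite /restrict (upd_idb (negbTE zu)) (upd_idb zv).
  have -> : upd (upd z u true) v true = upd z u true.
    by apply: upd_idb; rewrite upd_neq // eq_sym.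
  case/max_zeroP: Mz => /negbTE -> H; rewrite H //; first exact: bleq_updr.
  by apply/negP => /eqP E; move: zu; rewrite -E upd_eq.
case/(relposP _ P0): Ru0 => x; rewrite /restrict => /andP[g0 g1].
case: (climb_up g0) => m [xm Mm].
have mu : ~~ m u.
  apply/negP => mu; case/max_zeroP: Mm => /negP gm _; apply: gm.
  apply: Pg g1 _.
  have -> : upd (upd x u true) v false = upd (upd (upd x u false) v false) u true.
    by rewrite [RHS]upd_comm ?upd_upd // eq_sym.
  exact: bleq_updT.
have mv : ~~ m v by apply: contra mu; apply: Cl2.
set y := upd (upd m v true) w false.
have gy : ~~ g y.
  apply/negP => gy; case: (climb_down gy) => a [ay Ma].
  have aw : ~~ a w by apply/negP => aw; move/bleqP: ay => /(_ w aw); rewrite /y upd_eq.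
  have av : ~~ a v by apply: contra aw; apply: Cl1'.
  case/max_zeroP: Mm => /negP gm _; apply: gm.
  case/min_oneP: Ma => ga _; apply: Pg ga _; apply/bleqP => j aj.
  move/bleqP: ay => /(_ j aj); rewrite /y !updE.
  case: eqP => [jw|_]; first by move: aw; rewrite -jw aj.
  by case: eqP => [jv|//]; move: av; rewrite -jv aj.
have gyu : g (upd y u true).
  case/max_zeroP: Mm => _ H.
  have gmu : g (upd m u true).
    apply: H; first exact: bleq_updr.
    by apply/negP => /eqP E; move: mu; rewrite -E upd_eq.
  case: (climb_down gmu) => a [am Ma].
  have av : ~~ a v by apply/negP => av; move/bleqP: am => /(_ v av); rewrite upd_neq ?(negbTE mv) // eq_sym.
  have aw : ~~ a w by apply: contra av; apply: Cl1.
  case/min_oneP: Ma => ga _; apply: Pg ga _; apply/bleqP => j aj.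
  move/bleqP: am => /(_ j aj); rewrite /y !updE.
  case: eqP => // _; case: eqP => [jw|_]; first by move: aw; rewrite -jw aj.
  by case: eqP => // _.
case: (climb_up gy) => m' [ym' Mm'].
have yv : y v by rewrite /y upd_neq ?upd_eq // eq_sym.
have m'v : m' v by move/bleqP: ym'; apply.
have m'u := Cl2 _ Mm' m'v.
case/max_zeroP: Mm' => gm2 _.
by move: (Pg _ _ gyu (bleq_updT ym' m'u)); rewrite (negbTE gm2).
Qed.

End Select.
Section MainInd.
Variable n : nat.
Implicit Types (x y z : pt n) (f g h : pt n -> bool) (i j : 'I_n).

Lemma rel_lt g v a : relevant g v -> #|relevant_vars (restrict g v a)| < #|relevant_vars g|.
Proof.
move=> Rv; apply: proper_card; rewrite properE; apply/andP; split.
  by apply/subsetP => i; rewrite !inE; apply: rel_restrict.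
apply/subsetP => /(_ v); rewrite !inE Rv => /(_ isT) H.
by move: (indep_nrel (restrict_indep g v a)); rewrite H.
Qed.

Lemma Pext_dual g : Pext (dual g) -> Pext g.
Proof.
rewrite /Pext ext_dual relv_dual => -[H1 H2]; split => // E.
by case: (H2 E) => [/const_dual|/canal_dual]; [left|right].
Qed.

Lemma Pext_const g c : (forall x, g x = c) -> Pext g.
Proof.
move=> C; rewrite /Pext (const_ext C) (const_rel C); split => // _.
by left; exists c.
Qed.

Lemma Pext_all m : forall g, positive g -> #|relevant_vars g| <= m -> Pext g.
Proof.
elim: m => [|m IH] g Pg Hm.
  by apply: (Pext_const (norel_const Pg _)); apply/eqP; rewrite -leqn0.
case: (posnP #|relevant_vars g|) => [R0|Rpos].
  exact: (Pext_const (norel_const Pg R0)).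
case: (select Pg Rpos) => v [Rv [S|S]].
  apply: (core Pg Rv S); apply: IH; first by apply: pos_restrict.
  by rewrite -ltnS; apply: leq_trans Hm; apply: rel_lt.
apply: Pext_dual.
have Pd := dual_pos Pg.
have Rd : relevant (dual g) v by rewrite rel_dual.
have Ed : forall a, relevant_vars (restrict (dual g) v a) = relevant_vars (restrict g v (~~ a)).
  by move=> a; rewrite (rel_eq (restrict_dual g v a)) relv_dual.
apply: (core Pd Rd); first by rewrite !Ed.
apply: IH; first by apply: pos_restrict.
rewrite -ltnS; apply: leq_trans Hm; rewrite Ed.
by apply: rel_lt.
Qed.

End MainInd.
Section Lro.
Variable n : nat.
Implicit Types (x y z : pt n) (f g h s : pt n -> bool) (i j : 'I_n) (t : nested n).

Lemma compl_i x i : compl x i = ~~ x i.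
Proof. by rewrite ffunE. Qed.

Lemma lit_compl i b x : ~~ lit i b (compl x) = lit i b x.
Proof. by rewrite /lit compl_i; case: b; rewrite ?negbK. Qed.

Fixpoint ndual t : nested n :=
  match t with
  | NLit i b => NLit i b
  | NOr i b t' => NAnd i b (ndual t')
  | NAnd i b t' => NOr i b (ndual t')
  end.

Lemma ndual_eval t x : neval (ndual t) x = ~~ neval t (compl x).
Proof.
elim: t => [i b|i b t IH|i b t IH] /=; first by rewrite lit_compl.
  by rewrite IH negb_or lit_compl.
by rewrite IH negb_and lit_compl.
Qed.

Lemma ndual_vars t : nvars (ndual t) = nvars t.
Proof. by elim: t => //= i b t ->. Qed.

Lemma ndual_wf t : nwf (ndual t) = nwf t.
Proof. by elim: t => //= i b t ->; rewrite ndual_vars. Qed.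

Lemma neval_dep t x y : (forall j, j \in nvars t -> x j = y j) -> neval t x = neval t y.
Proof.
elim: t => [i b|i b t IH|i b t IH] /= H.
- by rewrite /lit H // inE.
- by rewrite /lit H ?inE ?eqxx // IH // => j jt; apply: H; rewrite inE jt orbT.
- by rewrite /lit H ?inE ?eqxx // IH // => j jt; apply: H; rewrite inE jt orbT.
Qed.

Lemma neval_upd t x i a : i \notin nvars t -> neval t (upd x i a) = neval t x.
Proof.
move=> Ni; apply: neval_dep => j jt; rewrite upd_neq //.
by apply: contraNneq Ni => <-.
Qed.

Lemma lit_upd i b x a : lit i b (upd x i a) = (if b then a else ~~ a).
Proof. by rewrite /lit upd_eq. Qed.

Lemma neval_ex t : nwf t -> (exists x, ~~ neval t x) /\ (exists x, neval t x).
Proof.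
elim: t => [i b|i b t IH|i b t IH] /=.
- move=> _; split; [exists (upd (zero n) i (~~ b))|exists (upd (zero n) i b)];
  by rewrite lit_upd; case: b.
- case/andP => Ni /IH [[x Hx] [y Hy]]; split.
    by exists (upd x i (~~ b)); rewrite lit_upd neval_upd //; case: b.
  by exists (upd y i b); rewrite lit_upd; case: b.
- case/andP => Ni /IH [[x Hx] [y Hy]]; split.
    by exists (upd x i (~~ b)); rewrite lit_upd; case: b.
  by exists (upd y i b); rewrite lit_upd neval_upd //; case: b.
Qed.

Lemma neval_rel t j : nwf t -> j \in nvars t -> relevant (neval t) j.
Proof.
elim: t => [i b|i b t IH|i b t IH] /=.
- move=> _; rewrite inE => /eqP ->; apply/relP; exists (zero n).
  by rewrite !lit_upd; case: b.
- case/andP => Ni Wt; rewrite inE => /orP[/eqP ->|jt].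
    case: (neval_ex Wt) => [[x Hx] _]; apply/relP; exists x.
    by rewrite !lit_upd !neval_upd // (negbTE Hx); case: b.
  have ji : j != i by apply: contraNneq Ni => <-.
  case/relP: (IH Wt jt) => x Hx; apply/relP; exists (upd x i (~~ b)).
  have L : forall a, lit i b (upd (upd x i (~~ b)) j a) = false.
    by move=> a; rewrite /lit upd_neq ?upd_eq 1?eq_sym //; case: b.
  have N : forall a, neval t (upd (upd x i (~~ b)) j a) = neval t (upd x j a).
    by move=> a; rewrite upd_comm 1?eq_sym // neval_upd.
  by rewrite !L !N.
- case/andP => Ni Wt; rewrite inE => /orP[/eqP ->|jt].
    case: (neval_ex Wt) => [_ [x Hx]]; apply/relP; exists x.
    by rewrite !lit_upd !neval_upd // Hx; case: b.
  have ji : j != i by apply: contraNneq Ni => <-.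
  case/relP: (IH Wt jt) => x Hx; apply/relP; exists (upd x i b).
  have L : forall a, lit i b (upd (upd x i b) j a) = true.
    by move=> a; rewrite /lit upd_neq ?upd_eq 1?eq_sym //; case: b.
  have N : forall a, neval t (upd (upd x i b) j a) = neval t (upd x j a).
    by move=> a; rewrite upd_comm 1?eq_sym // neval_upd.
  by rewrite !L !N.
Qed.

End Lro.
Section OrCount.
Variable n : nat.
Implicit Types (x y z : pt n) (f g h s : pt n -> bool) (i j : 'I_n) (t : nested n).

Lemma or_count f i : positive f -> (forall x, f (upd x i true)) ->
  (exists x, ~~ f (upd x i false)) ->
  #|extremal_points f| = #|extremal_points (restrict f i false)|.+1 /\
  #|relevant_vars f| = #|relevant_vars (restrict f i false)|.+1.
Proof.
move=> Pf T [x0 F0].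
set h := restrict f i false.
have Ri : relevant f i by apply/relP; exists x0; rewrite T; case: (f _) F0.
have Rs : relevant_vars f = i |: relevant_vars h.
  apply/setP => j; rewrite !inE; case: (eqVneq j i) => [->|ji] /=; first by rewrite Ri.
  apply/idP/idP => [Rj|]; last by apply: rel_restrict.
  case/orP: (rel_split Rj ji) => // R1.
  have C : forall x, restrict f i true x = true by move=> x; apply: T.
  by move: (const_rel C); move/eqP; rewrite cards_eq0 => /eqP E; move: R1; rewrite -in_rel E inE.
have iNh : i \notin relevant_vars h by rewrite inE; apply: indep_nrel; apply: restrict_indep.
split; last by rewrite Rs cardsU1 iNh.
apply/eqP; rewrite eqn_leq; apply/andP; split.
  set e := upd (zero n) i true.
  pose phi' p := if h p then p else upd p i false.
  apply: (@leq_trans #|e |: [set phi' p | p in extremal_points h]|).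
    apply: subset_leq_card; apply/subsetP => x; rewrite !inE.
    case xi: (x i).
      have fx : f x by rewrite -(upd_idb xi) T.
      rewrite /max_zero fx /= => Mx; apply/orP; left.
      case: (eqVneq x e) => // ne; case/min_oneP: Mx => _ H.
      have ex : bleq e x by apply: bleq_updT => //; apply: bleq_zero.
      by move: (H e ex); rewrite eq_sym ne T => /(_ isT).
    move=> Hx; apply/orP; right; apply/imsetP.
    case/orP: Hx => Hx.
      have M : upd x i true \in extremal_points h.
        rewrite inE; apply/orP; left; case/max_zeroP: Hx => fx H.
        apply/max_zeroP; split; first by rewrite /h /restrict upd_upd upd_idb.
        move=> y py ne; rewrite /h /restrict; apply: H.
          apply: bleq_updF; last by rewrite xi.
          by apply: bleq_trans (bleq_updr _ _) py.
        apply: contra ne => /eqP E; apply/eqP.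
        have yi : y i by move/bleqP: py; apply; rewrite upd_eq.
        by rewrite -E upd_upd upd_idb.
      exists (upd x i true) => //.
      rewrite /phi' /h /restrict upd_upd upd_idb //.
      by case/andP: Hx => /negbTE ->.
    have M : x \in extremal_points h.
      rewrite inE; apply/orP; right; case/min_oneP: Hx => fx H.
      apply/min_oneP; split; first by rewrite /h /restrict upd_idb.
      move=> y yx ne; rewrite /h /restrict.
      have yi : y i = false by apply/negP => yi; move/bleqP: yx => /(_ i yi); rewrite xi.
      by rewrite upd_idb //; apply: H.
    exists x => //.
    by rewrite /phi' /h /restrict upd_idb //; case/andP: Hx => ->.
  rewrite cardsU1; case: (_ \notin _) => //=; rewrite ?add1n ?add0n //.
    by rewrite ltnS; apply: leq_imset_card.
  by apply: leq_trans (leq_imset_card _ _) _.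
have Rd : relevant (dual f) i by rewrite rel_dual.
have C1 := count1 (dual_pos Pf) Rd.
have E : restrict (dual f) i true =1 dual h by move=> x; rewrite restrict_dual.
by move: C1; rewrite (ext_eq E) !ext_dual.
Qed.

End OrCount.

Section Final.
Variable n : nat.
Implicit Types (x y z : pt n) (f g h s : pt n -> bool) (i j : 'I_n) (t : nested n).

Lemma or_case f i b s : positive f -> (forall x, f x = lit i b x || s x) ->
  (forall x a, s (upd x i a) = s x) -> (exists x, ~~ s x) ->
  (forall h, positive h -> h =1 s -> #|extremal_points h| = #|relevant_vars h|.+1) ->
  #|extremal_points f| = #|relevant_vars f|.+1.
Proof.
move=> Pf Ef Is [x0 Hx0] IHs.
have bt : b = true.
  case: b Ef => // Ef.
  have := Pf (upd x0 i false) (upd x0 i true).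
  rewrite !Ef !lit_upd !Is (negbTE Hx0) /= => /(_ isT (bleq_upd01 _ _)).
  by [].
have T : forall x, f (upd x i true) by move=> x; rewrite Ef bt lit_upd.
have F : exists x, ~~ f (upd x i false) by exists x0; rewrite Ef bt lit_upd Is.
case: (or_count Pf T F) => -> ->; congr _.+1.
apply: IHs; first by apply: pos_restrict.
by move=> x; rewrite /restrict Ef bt lit_upd Is.
Qed.

Lemma eq_dual f : #|extremal_points (dual f)| = #|relevant_vars (dual f)|.+1 ->
  #|extremal_points f| = #|relevant_vars f|.+1.
Proof. by rewrite ext_dual relv_dual. Qed.

Lemma eq_of_lro_t t : nwf t -> forall f, positive f ->
  (f =1 neval t \/ f =1 neval (ndual t)) -> #|extremal_points f| = #|relevant_vars f|.+1.
Proof.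
elim: t => [i b|i b t IH|i b t IH] /=.
- move=> _ f Pf EE.
  have Ef : forall x, f x = lit i b x || (fun _ => false) x.
    by move=> x; rewrite orbF; case: EE => ->.
  apply: (or_case Pf Ef) => //; first by exists (zero n).
  move=> h Ph Eh; by rewrite (const_ext Eh) (const_rel Eh).
- case/andP => Ni Wt f Pf EE.
  have Is : forall x a, neval t (upd x i a) = neval t x by move=> x a; apply: neval_upd.
  have Ex : exists x, ~~ neval t x by case: (neval_ex Wt).
  have IHs : forall h, positive h -> h =1 neval t ->
      #|extremal_points h| = #|relevant_vars h|.+1.
    by move=> h Ph Eh; apply: IH => //; left.
  case: EE => Ef.
    by apply: (or_case Pf _ Is Ex IHs) => x; rewrite Ef.
  apply: eq_dual; apply: (or_case (dual_pos Pf) _ Is Ex IHs) => x.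
  by rewrite /dual Ef /= ndual_eval complK negb_and lit_compl negbK.
- case/andP => Ni Wt f Pf EE.
  have Is : forall x a, neval (ndual t) (upd x i a) = neval (ndual t) x.
    by move=> x a; apply: neval_upd; rewrite ndual_vars.
  have Ex : exists x, ~~ neval (ndual t) x.
    case: (neval_ex Wt) => _ [x Hx]; exists (compl x).
    by rewrite ndual_eval complK Hx.
  have IHs : forall h, positive h -> h =1 neval (ndual t) ->
      #|extremal_points h| = #|relevant_vars h|.+1.
    by move=> h Ph Eh; apply: IH => //; right.
  case: EE => Ef; last by apply: (or_case Pf _ Is Ex IHs) => x; rewrite Ef.
  apply: eq_dual; apply: (or_case (dual_pos Pf) _ Is Ex IHs) => x.
  by rewrite /dual Ef /= ndual_eval negb_and lit_compl.
Qed.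

Lemma eq_of_lro f : positive f -> lro f -> #|extremal_points f| = #|relevant_vars f|.+1.
Proof.
move=> Pf [[c C]|[t [Wt Et]]]; first by rewrite (const_ext C) (const_rel C).
by apply: (eq_of_lro_t Wt Pf); left.
Qed.

Lemma lro_dual f : lro (dual f) -> lro f.
Proof.
case=> [/const_dual|[t [Wt Et]]]; first by left.
right; exists (ndual t); rewrite ndual_wf; split => // x.
by rewrite ndual_eval -Et /dual complK negbK.
Qed.

Lemma lro_of_eq m : forall f, positive f -> #|relevant_vars f| <= m ->
  #|extremal_points f| = #|relevant_vars f|.+1 -> lro f.
Proof.
elim: m => [|m IH] f Pf Hm Eq.
  left; exists (f (zero n)); apply: norel_const => //; apply/eqP; rewrite -leqn0 //.
have or_step : forall f i, positive f -> #|relevant_vars f| <= m.+1 ->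
    #|extremal_points f| = #|relevant_vars f|.+1 -> (forall x, f (upd x i true)) -> lro f.
  move=> {}f i {}Pf {}Hm {}Eq T.
  case: (pickP (fun x => ~~ f (upd x i false))) => [x0 H0|N]; last first.
    left; exists true => x; apply: Pf (negbFE (N x)) _; exact: bleq_updl.
  have [Ce Cr] := or_count Pf T (ex_intro _ x0 H0).
  have Ih : lro (restrict f i false).
    apply: IH; first by apply: pos_restrict.
      by rewrite -ltnS -Cr.
    by move: Eq; rewrite Ce Cr => -[].
  have fE : forall x, f x = x i || restrict f i false x.
    move=> x; case xi: (x i) => /=; first by rewrite -(upd_idb xi) T.
    by rewrite /restrict upd_idb.
  case: Ih => [[c C]|[t [Wt Et]]].
    right; exists (NLit i true); split => // x; rewrite fE C /lit.
    by move: (C x0); rewrite /restrict (negbTE H0) => <-; rewrite orbF.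
  have Ni : i \notin nvars t.
    apply/negP => it; have := neval_rel Wt it.
    have -> : relevant (neval t) i = relevant (restrict f i false) i.
      by rewrite -!in_rel (rel_eq Et).
    by rewrite (negbTE (indep_nrel (restrict_indep f i false))).
  right; exists (NOr i true t); rewrite /= Ni Wt; split => // x.
  by rewrite fE Et.
case: (Pext_all Pf (leqnn _)) => _ /(_ Eq) [//|[i [a [c C]]]]; first by left.
rewrite /restrict in C.
case: a C => C; case: c C => C.
- by apply: (or_step f i).
- left; exists false => x; apply/negP => fx.
  by move: (Pf _ _ fx (bleq_updr x i)); rewrite C.
- left; exists true => x; apply: Pf (C x) _; exact: bleq_updl.
- apply: lro_dual; apply: (or_step (dual f) i (dual_pos Pf)).
  + by rewrite relv_dual.
  + by rewrite ext_dual relv_dual.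
  + by move=> x; rewrite /dual upd_compl /= C.
Qed.

End Final.

Theorem mainTheorem3 (n : nat) (f : pt n -> bool) :
  positive f -> canalyzing f ->
  (#|relevant_vars f|.+1 <= #|extremal_points f|)%N /\
  (#|extremal_points f| = #|relevant_vars f|.+1 <-> lro f).
Proof.
move=> Pf _; have [H1 _] := Pext_all Pf (leqnn _).
split => //; split; first exact: (lro_of_eq Pf (leqnn _)).
exact: eq_of_lro.
Qed.
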